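(* Let $F:\mathcal{P}(V,A)\to 2^A\setminus\{\emptyset\}$ be a committee selection rule satisfying SPO and SPP. Let $P$ be a profile, $i$ a voter, $W=F(P)$, $s=\mathrm{best}(P_i,W)$, $b=\mathrm{worst}(P_i,W)$, and let $W'=F(P^{i\uparrow s})$. Then (1) $\mathrm{best}(P_i^{\uparrow s},W')=s$, and (2) $\mathrm{worst}(P_i^{\uparrow s},W')=b$.
   Context: $V$ is a finite nonempty set of voters, $A$ a finite set of alternatives; a profile $P$ assigns to each voter $i$ a linear order $P_i$ on $A$ (strict part $\succ_i$, weak part $\succeq_i$); $P_i'P_{-i}$ replaces voter $i$'s order by $P_i'$. A committee selection rule maps each profile to a nonempty subset of $A$. $\mathrm{best}(P_i,W)$, $\mathrm{worst}(P_i,W)$ are the $P_i$-best and $P_i$-worst elements of nonempty $W\subseteq A$. SPO: for all $P$, $i$, $P_i'$, $\mathrm{best}(P_i,F(P))\succeq_i\mathrm{best}(P_i,F(P_i'P_{-i}))$; SPP: same with $\mathrm{worst}$. $P_i^{\uparrow s}$ is the linear order obtained from $P_i$ by swapping $s$ with the alternative directly above it (no change if $s$ is already ranked first), and $P^{i\uparrow s}$ is the profile obtained from $P$ by replacing $P_i$ with $P_i^{\uparrow s}$. *)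

(* Defs.v *)
From mathcomp Require Import all_boot.
Set Implicit Arguments. Unset Strict Implicit. Unset Printing Implicit Defensive.

(* A linear order on a finite set A of alternatives, represented as the list of
   all alternatives from best (head) to worst, each occurring exactly once. *)
Record lorder (A : finType) := LOrder {
  lseq : seq A;
  lseqP : perm_eq lseq (enum A) }.

Definition lstrict (A : finType) (Pi : lorder A) (x y : A) : bool :=
  index x (lseq Pi) < index y (lseq Pi).
Definition lweak (A : finType) (Pi : lorder A) (x y : A) : bool :=
  index x (lseq Pi) <= index y (lseq Pi).

Definition profile (V A : finType) := V -> lorder A.
Definition csr (V A : finType) := profile V A -> {set A}.
Definition nonempty_valued (V A : finType) (F : csr V A) : Prop :=
  forall P, F P != set0.

Definition upd (V A : finType) (P : profile V A) (i : V) (Pi' : lorder A)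
  : profile V A := fun j => if j == i then Pi' else P j.

Definition is_best (A : finType) (Pi : lorder A) (W : {set A}) (x : A) : Prop :=
  x \in W /\ forall y, y \in W -> lweak Pi x y.
Definition is_worst (A : finType) (Pi : lorder A) (W : {set A}) (x : A) : Prop :=
  x \in W /\ forall y, y \in W -> lweak Pi y x.

Definition SPO (V A : finType) (F : csr V A) : Prop :=
  forall P i Pi' x y, is_best (P i) (F P) x ->
    is_best (P i) (F (upd P i Pi')) y -> lweak (P i) x y.
Definition SPP (V A : finType) (F : csr V A) : Prop :=
  forall P i Pi' x y, is_worst (P i) (F P) x ->
    is_worst (P i) (F (upd P i Pi')) y -> lweak (P i) x y.

(* swap s with the element directly above it (no change if s is first) *)
Fixpoint swap_up (A : eqType) (s : A) (l : seq A) : seq A :=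
  match l with
  | x :: ((y :: l'') as l') => if y == s then y :: x :: l'' else x :: swap_up s l'
  | _ => l
  end.

Lemma swap_up_perm (A : eqType) (s : A) (l : seq A) : perm_eq (swap_up s l) l.
Proof.
elim: l => [//|x [|y l] IH] //=.
case: ifP => _; last by rewrite perm_cons.
by apply/permP => p /=; rewrite !addnA [(p y + _)%N]addnC.
Qed.

Definition lup (A : finType) (Pi : lorder A) (s : A) : lorder A :=
  @LOrder A (swap_up s (lseq Pi)) (perm_trans (swap_up_perm s (lseq Pi)) (lseqP Pi)).

Definition prof_up (V A : finType) (P : profile V A) (i : V) (s : A) : profile V A :=
  upd P i (lup (P i) s).

(* Main.v *)
Require Import Defs.
From mathcomp Require Import all_boot zify.
Set Warnings "-notation-overridden".
Set Implicit Arguments. Unset Strict Implicit.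

Lemma idxc (T : eqType) (x a : T) l : index x (a :: l) = if a == x then 0 else (index x l).+1.
Proof. by []. Qed.

Ltac neqs := repeat match goal with
  | H : is_true (?u != ?v) |- context[?v == ?u] => rewrite [v == u]eq_sym (negbTE H)
  | H : is_true (?u != ?v) |- context[?u == ?v] => rewrite (negbTE H)
  end.

Ltac grind4 a s x y :=
  case: (eqVneq x a) => [?|?]; case: (eqVneq x s) => [?|?];
  case: (eqVneq y a) => [?|?]; case: (eqVneq y s) => [?|?]; subst;
  try (match goal with H: is_true (?u != ?u) |- _ => by rewrite eqxx in H end);
  rewrite ?eqxx; neqs; rewrite /= ?eqxx; neqs; rewrite /=; try lia.

Lemma P1 (T : eqType) (s : T) (l : seq T) x y : uniq l ->
  index x l <= index y l -> (y != s) || (x == s) ->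
  index x (swap_up s l) <= index y (swap_up s l).
Proof.
elim: l => [//|a l IH]; case: l IH => [//|c l] IH /=.
case/andP=> anin u.
have ac : a != c by apply: contra anin => /eqP->; rewrite inE eqxx.
case: (eqVneq c s) => [cs|cs].
- subst c. grind4 a s x y.
- change (index x [:: a, c & l] <= index y [:: a, c & l] -> (y != s) || (x == s) ->
    index x (a :: swap_up s (c :: l)) <= index y (a :: swap_up s (c :: l))).
  move: (IH u) => {}IH. rewrite !(@idxc _ _ a).
  case: (eqVneq a x) => [<-|ax]; first by [].
  case: (eqVneq a y) => [<-|ay]; first by [].
  rewrite !ltnS; exact: IH.
Qed.

Lemma P2 (T : eqType) (s : T) (l : seq T) x y : uniq l ->
  index x (swap_up s l) <= index y (swap_up s l) -> x != s ->
  index x l <= index y l.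
Proof.
elim: l => [//|a l IH]; case: l IH => [//|c l] IH /=.
case/andP=> anin u.
have ac : a != c by apply: contra anin => /eqP->; rewrite inE eqxx.
case: (eqVneq c s) => [cs|cs].
- subst c. grind4 a s x y.
- change (index x (a :: swap_up s (c :: l)) <= index y (a :: swap_up s (c :: l)) -> x != s ->
    index x [:: a, c & l] <= index y [:: a, c & l]).
  move: (IH u) => {}IH. rewrite !(@idxc _ _ a).
  case: (eqVneq a x) => [<-|ax]; first by [].
  case: (eqVneq a y) => [e|ay]; first by [].
  rewrite /= !ltnS; exact: IH.
Qed.

From Stdlib Require Import FunctionalExtensionality.

Section Aux.
Variable A : finType.

Lemma lmem (Pi : lorder A) x : x \in lseq Pi.
Proof. by rewrite (perm_mem (lseqP Pi)) mem_enum. Qed.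

Lemma luniq (Pi : lorder A) : uniq (lseq Pi).
Proof. by rewrite (perm_uniq (lseqP Pi)) enum_uniq. Qed.

Lemma lantisym (Pi : lorder A) x y : lweak Pi x y -> lweak Pi y x -> x = y.
Proof.
rewrite /lweak => h1 h2.
apply: (@index_inj _ x (lseq Pi)); try exact: lmem.
by apply/eqP; rewrite eqn_leq h1 h2.
Qed.

Lemma ltrans (Pi : lorder A) x y z : lweak Pi x y -> lweak Pi y z -> lweak Pi x z.
Proof. exact: leq_trans. Qed.

Lemma lrefl (Pi : lorder A) x : lweak Pi x x.
Proof. exact: leqnn. Qed.

Lemma best_ex (Pi : lorder A) (W : {set A}) : W != set0 -> exists x, is_best Pi W x.
Proof.
case/set0Pn => x0 Hx0.
case: (arg_minnP (fun x => index x (lseq Pi)) Hx0) => x Hx Hmin.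
by exists x; split.
Qed.

Lemma worst_ex (Pi : lorder A) (W : {set A}) : W != set0 -> exists x, is_worst Pi W x.
Proof.
case/set0Pn => x0 Hx0.
case: (arg_maxnP (fun x => index x (lseq Pi)) Hx0) => x Hx Hmax.
by exists x; split.
Qed.

Lemma lupP1 (Pi : lorder A) s x y : lweak Pi x y -> (y != s) || (x == s) ->
  lweak (lup Pi s) x y.
Proof. move=> h1 h2; exact: P1 (luniq Pi) h1 h2. Qed.

Lemma lupP2 (Pi : lorder A) s x y : lweak (lup Pi s) x y -> x != s -> lweak Pi x y.
Proof. move=> h1 h2; exact: P2 (luniq Pi) h1 h2. Qed.

End Aux.

Theorem lemma8 (V A : finType) (F : csr V A)
  (HF : nonempty_valued F) (Hspo : SPO F) (Hspp : SPP F)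
  (P : profile V A) (i : V) (s b : A) :
  is_best (P i) (F P) s -> is_worst (P i) (F P) b ->
  is_best (lup (P i) s) (F (prof_up P i s)) s /\
  is_worst (lup (P i) s) (F (prof_up P i s)) b.
Proof.
move=> [sW Hs] [bW Hb].
have HPi : prof_up P i s i = lup (P i) s by rewrite /prof_up /upd eqxx.
have Hback : upd (prof_up P i s) i (P i) = P.
  apply: functional_extensionality => j; rewrite /upd /prof_up /upd.
  by case: (eqVneq j i) => [->|].
have Bs : is_best (lup (P i) s) (F P) s.
  split=> // y yW; apply: lupP1; [exact: Hs | by rewrite eqxx orbT].
have Bb : is_worst (lup (P i) s) (F P) b.
  split=> // y yW.
  case: (eqVneq b s) => [e|bs].
  - have -> : y = s by apply: lantisym; [rewrite -e; exact: Hb | exact: Hs].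
    by rewrite e; exact: lrefl.
  - by apply: lupP1; [exact: Hb | rewrite bs].
split.
- have [y Hy] := best_ex (P i) (HF (prof_up P i s)).
  have sy : lweak (P i) s y := Hspo P i (lup (P i) s) s y (conj sW Hs) Hy.
  have [x Hx] := best_ex (lup (P i) s) (HF (prof_up P i s)).
  have xs : lweak (lup (P i) s) x s.
    have := Hspo (prof_up P i s) i (P i) x s.
    by rewrite Hback HPi; apply.
  have ex : s = x.
    case: (eqVneq x s) => [->//|xs'].
    have xs2 := lupP2 xs xs'.
    apply: lantisym xs2.
    apply: ltrans sy _; apply: Hy.2; exact: Hx.1.
  by rewrite -ex in Hx.
- have [z Hz] := worst_ex (P i) (HF (prof_up P i s)).
  have bz : lweak (P i) b z := Hspp P i (lup (P i) s) b z (conj bW Hb) Hz.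
  have [u Hu] := worst_ex (lup (P i) s) (HF (prof_up P i s)).
  have ub : lweak (lup (P i) s) u b.
    have := Hspp (prof_up P i s) i (P i) u b.
    by rewrite Hback HPi; apply.
  have zu : lweak (lup (P i) s) z u := Hu.2 z Hz.1.
  have zb := ltrans zu ub.
  have ezb : z = b.
    case: (eqVneq z s) => [e|zs].
    - subst z; apply: lantisym; [exact: Hs | exact: bz].
    - by apply: lantisym (lupP2 zb zs) bz.
  have eu : b = u by apply: lantisym ub; rewrite -ezb.
  by rewrite -eu in Hu.
Qed.
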